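(* In the setting $|H|=1$ of the context (with Assumption 1), the convex relaxation (R1) is exact (its optimal value equals $c^\star$) if the convex problem $\min\ \sum_{j\in N}x_j^2-w_1$ over $(\boldsymbol{\mu},{\bf x},w_1)\in\mathbb{R}^m\times\mathbb{R}^n\times\mathbb{R}$ subject to $d_1^*+\sum_{i\in M}\xi_i\mu_i=0$; $c_1+\sum_{i\in M}a_{i1}\mu_i=0$; $(D_{jj}-d_1^* )x_j+c_j+\sum_{i\in M}a_{ij}\mu_i=0$ for $j\in N\setminus\{1\}$; $\xi_iw_1+2\sum_{j\in N}a_{ij}x_j\le b_i$ for $i\in M$; $\mu_i\ge0$ for $i\in M$, has nonnegative optimal value (with the convention that an infeasible problem has optimal value $+\infty$).
   Context: Let $N=\{1,\dots,n\}$, $M=\{1,\dots,m\}$. Data: reals $D_{jj}$ ($j\in N$), $c_j$, $a_{ij}$, $b_i$, $\xi_i$ ($i\in M$, $j\in N$). The diagonal QCQP (P) is $c^\star=\inf\{\sum_{j}D_{jj}x_j^2+2\sum_jc_jx_j : \xi_i\sum_jx_j^2+2\sum_ja_{ij}x_j\le b_i,\ i\in M\}$, i.e. all constraint Hessians are ${\bf A}^i=\xi_i{\bf I}$. Its Shor relaxation is $v^\star=\inf\{{\bf D}\bullet{\bf X}+2{\bf c}^\top{\bf x} : \xi_i\,\mathrm{trace}({\bf X})+2{\bf a}_i^\top{\bf x}\le b_i\ (i\in M),\ {\bf X}-{\bf x}{\bf x}^\top\succeq{\bf O}\}$ with ${\bf D}=\mathrm{diag}(D_{jj})$. Assumption 1: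 (P) is feasible; some $\bar{\bf y}\ge0$ has $\sum_i\bar y_i\xi_i>0$; the Shor relaxation has a feasible point in the interior of its feasible region. It is assumed that $d_1^*=\min_{j\in N}D_{jj}$ is attained uniquely at $j=1$. The convex relaxation (R1) is: $\min\ d_1^*w_1+\sum_{j\in N}(D_{jj}-d_1^* )x_j^2+2\sum_{j\in N}c_jx_j$ s.t. $\xi_iw_1+2\sum_{j\in N}a_{ij}x_j\le b_i$ ($i\in M$), $\sum_{j\in N}x_j^2\le w_1$; its optimal value equals $v^\star$. *)

(* Defs.v *)
From HB Require Import structures.
From mathcomp Require Import all_boot all_order all_algebra.
From mathcomp Require Import all_classical all_reals ereal.
Set Implicit Arguments. Unset Strict Implicit. Unset Printing Implicit Defensive.
Import Order.TTheory GRing.Theory Num.Theory.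
Local Open Scope ring_scope.
Local Open Scope classical_set_scope.

Section QCQP.
Variables (R : realType) (n m : nat).
(* Index set N = {1..n} is 'I_n.+1 (index "1" of the paper is ord0);
   M = {1..m} is 'I_m. *)
Variables (D c : 'I_n.+1 -> R) (a : 'I_m -> 'I_n.+1 -> R) (b xi : 'I_m -> R).

Definition objP (x : 'I_n.+1 -> R) : R :=
  \sum_j D j * x j ^+ 2 + 2 * \sum_j c j * x j.
Definition feasP (x : 'I_n.+1 -> R) : Prop :=
  forall i, xi i * (\sum_j x j ^+ 2) + 2 * (\sum_j a i j * x j) <= b i.
Definition cstar : \bar R := ereal_inf [set (objP x)%:E | x in feasP].

Definition psd (A : 'M[R]_n.+1) : Prop :=
  forall v : 'cV[R]_n.+1, 0 <= (v^T *m A *m v) 0 0.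

Definition shor_feas (x : 'I_n.+1 -> R) (X : 'M[R]_n.+1) : Prop :=
  X^T = X /\
  (forall i, xi i * \tr X + 2 * (\sum_j a i j * x j) <= b i) /\
  psd (X - \col_j x j *m (\col_j x j)^T).

(* (x, X) lies in the interior of the Shor feasible region, taken in the
   ambient space R^n x S^n (max-norm balls) *)
Definition shor_interior (x : 'I_n.+1 -> R) (X : 'M[R]_n.+1) : Prop :=
  shor_feas x X /\
  exists2 e : R, 0 < e &
    forall (x' : 'I_n.+1 -> R) (X' : 'M[R]_n.+1), X'^T = X' ->
      (forall j, `|x' j - x j| < e) ->
      (forall j k, `|X' j k - X j k| < e) -> shor_feas x' X'.

Definition assumption1 : Prop :=
  (exists x, feasP x) /\
  (exists y : 'I_m -> R, (forall i, 0 <= y i) /\ 0 < \sum_i y i * xi i) /\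
  (exists x X, shor_interior x X).

(* d_1^* = D_11, given the hypothesis that the minimum is attained
   (uniquely) at index 1 = ord0 *)
Definition d1star : R := D ord0.

Definition objR1 (x : 'I_n.+1 -> R) (w1 : R) : R :=
  d1star * w1 + \sum_j (D j - d1star) * x j ^+ 2 + 2 * \sum_j c j * x j.
Definition feasR1 (x : 'I_n.+1 -> R) (w1 : R) : Prop :=
  (forall i, xi i * w1 + 2 * (\sum_j a i j * x j) <= b i) /\
  \sum_j x j ^+ 2 <= w1.
Definition valR1 : \bar R :=
  ereal_inf [set (objR1 p.1 p.2)%:E | p in [set p | feasR1 p.1 p.2]].

(* the auxiliary convex problem, variables (mu, x, w1);
   ereal_inf of the empty set is +oo, matching the convention *)
Definition feasAux (mu : 'I_m -> R) (x : 'I_n.+1 -> R) (w1 : R) : Prop :=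
  d1star + \sum_i xi i * mu i = 0 /\
  c ord0 + \sum_i a i ord0 * mu i = 0 /\
  (forall j, j != ord0 ->
     (D j - d1star) * x j + c j + \sum_i a i j * mu i = 0) /\
  (forall i, xi i * w1 + 2 * (\sum_j a i j * x j) <= b i) /\
  (forall i, 0 <= mu i).
Definition valAux : \bar R :=
  ereal_inf [set ((\sum_j p.1.2 j ^+ 2) - p.2)%:E
            | p in [set p | feasAux p.1.1 p.1.2 p.2]].
End QCQP.

(* Main.v *)
Require Import Defs.
From HB Require Import structures.
From mathcomp Require Import all_boot all_order all_algebra.
From mathcomp Require Import all_classical all_reals ereal.
From mathcomp Require Import topology normedtype derive.
From mathcomp Require Import ring lra.
Import Order.TTheory GRing.Theory Num.Theory.
Import numFieldNormedType.Exports.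
Local Open Scope ring_scope.
Local Open Scope classical_set_scope.
Set Implicit Arguments. Unset Strict Implicit. Unset Printing Implicit Defensive.

Definition linF (R : realFieldType) (V : lmodType R) (f : V -> R) :=
  forall u v t, f (u - t *: v) = f u - t * f v.

Lemma linF0 (R : realFieldType) (V : lmodType R) (f : V -> R) :
  linF f -> f 0 = 0.
Proof. move=> lf; have := lf 0 0 1; rewrite scale1r subrr mul1r subrr; done. Qed.

Lemma linFN (R : realFieldType) (V : lmodType R) (f : V -> R) y :
  linF f -> f (- y) = - f y.
Proof. move=> lf; have := lf 0 y 1; rewrite scale1r sub0r mul1r (linF0 lf) sub0r; done. Qed.

Lemma farkas (R : realFieldType) (V : lmodType R) (m : nat)
  (a : nat -> V -> R) (c : V -> R) :
  (forall i, linF (a i)) -> linF c ->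
  (forall y, (forall i, (i < m)%N -> a i y <= 0) -> c y <= 0) ->
  exists mu : nat -> R, (forall i, 0 <= mu i) /\
    forall y, c y = \sum_(i < m) mu i * a i y.
Proof.
elim: m a c => [|m IH] a c la lc H.
  exists (fun _ => 0); split=> // y; rewrite big_ord0.
  have H0 : forall i, (i < 0)%N -> a i (- y) <= 0 by [].
  apply/eqP; rewrite eq_le H //=; have := H (- y) H0.
  by rewrite linFN // oppr_le0.
have [[y0 [Hy0 Hc0]]|Hno] :=
  pselect (exists y0, (forall i, (i < m)%N -> a i y0 <= 0) /\ 0 < c y0).
  have Ham : 0 < a m y0.
    rewrite ltNge; apply/negP => Hle.
    have Hle' : forall i, (i < m.+1)%N -> a i y0 <= 0.
      by move=> i; rewrite ltnS leq_eqVlt; case/orP => [/eqP->//|/Hy0 //].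
    by have := H y0 Hle'; rewrite leNgt Hc0.
  pose al := a m y0.
  pose a' i y := a i y - (a i y0 / al) * a m y.
  pose c' y := c y - (c y0 / al) * a m y.
  have la' i : linF (a' i).
    by move=> u v t; rewrite /a' la la; ring.
  have lc' : linF c'.
    by move=> u v t; rewrite /c' lc la; ring.
  have H' : forall y, (forall i, (i < m)%N -> a' i y <= 0) -> c' y <= 0.
    move=> y Hy.
    have e1 i : a i (y - (a m y / al) *: y0) = a' i y.
      by rewrite la /a'; ring.
    have -> : c' y = c (y - (a m y / al) *: y0) by rewrite lc /c'; ring.
    apply: H => i; rewrite ltnS leq_eqVlt; case/orP => [/eqP->|him].
      rewrite la -/al.
      have -> : a m y - a m y / al * al = 0 by field; rewrite gt_eqF.
      by [].
    by rewrite e1; apply: Hy.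
  have [mu [mu0 Hmu]] := IH a' c' la' lc' H'.
  pose lst := (c y0 - \sum_(i < m) mu i * a i y0) / al.
  exists (fun i => if i == m then lst else mu i); split.
    move=> k; case: eqP => // _; rewrite /lst; apply: divr_ge0; last exact: ltW.
    rewrite subr_ge0; apply: le_trans (ltW Hc0).
    by apply: sumr_le0 => i _; rewrite mulr_ge0_le0 //; apply: Hy0.
  move=> y; rewrite big_ord_recr /= eqxx.
  have -> : \sum_(i < m) (if (widen_ord (leqnSn m) i : nat) == m then lst else mu i) * a i y
     = \sum_(i < m) mu i * a i y.
    by apply: eq_bigr => i _; rewrite /= ltn_eqF.
  have := Hmu y.
  rewrite /c' /a'.
  under eq_bigr do rewrite mulrBr.
  rewrite sumrB => E.
  have E2 : \sum_(i < m) mu i * (a i y0 / al * a m y) = (\sum_(i < m) mu i * a i y0) / al * a m y.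
    rewrite mulr_suml mulr_suml; apply: eq_bigr => i _; ring.
  rewrite E2 in E.
  rewrite /lst.
  have -> : c y = c y0 / al * a m y + (\sum_(i < m) mu i * a i y - (\sum_(i < m) mu i * a i y0) / al * a m y).
    by rewrite -E; ring.
  ring.
have H' : forall y, (forall i, (i < m)%N -> a i y <= 0) -> c y <= 0.
  move=> y Hy; rewrite leNgt; apply/negP => cy; apply: Hno; exists y; split=> //.
have [mu [mu0 Hmu]] := IH a c la lc H'.
exists (fun i => if i == m then 0 else mu i); split.
  by move=> i; case: eqP.
move=> y; rewrite big_ord_recr /= eqxx mul0r addr0 Hmu.
by apply: eq_bigr => i _; rewrite /= ltn_eqF.
Qed.

Definition xz (R : realType) n (z : 'rV[R]_(n.+1 + 1)) (j : 'I_n.+1) : R :=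
  z ord0 (lshift 1 j).
Definition wz (R : realType) n (z : 'rV[R]_(n.+1 + 1)) : R :=
  z ord0 (rshift n.+1 ord0).
Definition mkz (R : realType) n (x : 'I_n.+1 -> R) (w : R) : 'rV[R]_(n.+1 + 1) :=
  row_mx (\row_j x j) (const_mx w).

Lemma xz_mkz (R : realType) n x w j : xz (@mkz R n x w) j = x j.
Proof. by rewrite /xz /mkz row_mxEl mxE. Qed.
Lemma wz_mkz (R : realType) n x w : wz (@mkz R n x w) = w.
Proof. by rewrite /wz /mkz row_mxEr mxE. Qed.
Lemma xz_lin (R : realType) n (u v : 'rV[R]_(n.+1 + 1)) t j :
  xz (u + t *: v) j = xz u j + t * xz v j.
Proof. by rewrite /xz !mxE. Qed.
Lemma wz_lin (R : realType) n (u v : 'rV[R]_(n.+1 + 1)) t :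
  wz (u + t *: v) = wz u + t * wz v.
Proof. by rewrite /wz !mxE. Qed.

Lemma cont_xz (R : realType) n j : continuous (fun z : 'rV[R]_(n.+1 + 1) => xz z j).
Proof. exact: coord_continuous. Qed.
Lemma cont_wz (R : realType) n : continuous (fun z : 'rV[R]_(n.+1 + 1) => wz z).
Proof. exact: coord_continuous. Qed.
Lemma cont_add (R : realType) k (f g : 'rV[R]_k -> R) :
  continuous f -> continuous g -> continuous (fun z => f z + g z).
Proof. by move=> cf cg x; apply: (continuousD (cf x) (cg x)). Qed.
Lemma cont_mul (R : realType) k (f g : 'rV[R]_k -> R) :
  continuous f -> continuous g -> continuous (fun z => f z * g z).
Proof. by move=> cf cg x; apply: (continuousM (cf x) (cg x)). Qed.
Lemma cont_cst (R : realType) k (r : R) : continuous (fun z : 'rV[R]_k => r).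
Proof. exact: cst_continuous. Qed.
Lemma cont_sum (R : realType) k (I : Type) (s : seq I) (F : I -> 'rV[R]_k -> R) :
  (forall i, continuous (F i)) -> continuous (fun z => \sum_(i <- s) F i z).
Proof.
move=> cF; elim: s => [|h s IH].
  have -> : (fun z : 'rV[R]_k => \sum_(i <- [::]) F i z) = (fun=> 0).
    by apply: funext => z; rewrite big_nil.
  exact: cont_cst.
have -> : (fun z => \sum_(i <- h :: s) F i z) = (fun z => F h z + \sum_(i <- s) F i z).
  by apply: funext => z; rewrite big_cons.
exact: cont_add.
Qed.
Lemma closed_lefun (R : realType) k (f g : 'rV[R]_k -> R) :
  continuous f -> continuous g -> closed [set z | f z <= g z].
Proof.
move=> cf cg.
have -> : [set z | f z <= g z] = (fun z => g z - f z) @^-1` [set x | 0 <= x].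
  by apply/seteqP; split => z /=; rewrite subr_ge0.
apply: (proj1 (continuous_closedP _)); last exact: closed_ge.
apply: cont_add => //; move=> x; apply: continuousN; exact: cf.
Qed.

Lemma feas_bound (R : realType) n m (a : 'I_m -> 'I_n.+1 -> R) (b xi : 'I_m -> R)
  (y : 'I_m -> R) : (forall i, 0 <= y i) -> 0 < \sum_i y i * xi i ->
  exists W, forall x w, feasR1 a b xi x w -> w <= W.
Proof.
move=> y0 sg.
set s := \sum_i y i * xi i.
pose al j := \sum_i y i * a i j.
pose be := \sum_i y i * b i.
exists (2 / s * (be + 2 / s * \sum_j al j ^+ 2)).
move=> x w [Hc Hn].
have H1 : \sum_i y i * (xi i * w + 2 * \sum_j a i j * x j) <= be.
  by apply: ler_sum => i _; apply: ler_wpM2l.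
have E1 : \sum_i y i * (xi i * w + 2 * \sum_j a i j * x j)
        = s * w + 2 * \sum_j al j * x j.
  rewrite /s /al.
  under eq_bigr do rewrite mulrDr.
  rewrite big_split /=; congr (_ + _).
    by rewrite mulr_suml; apply: eq_bigr => i _; rewrite mulrA.
  rewrite mulr_sumr.
  under eq_bigr do rewrite mulr_sumr mulr_sumr.
  rewrite exchange_big /=; apply: eq_bigr => j _.
  rewrite mulr_suml mulr_sumr; apply: eq_bigr => i _; ring.
have H2 : forall j, - (s / 2) * x j ^+ 2 - 2 / s * al j ^+ 2 <= 2 * (al j * x j).
  move=> j; rewrite -subr_ge0.
  have -> : 2 * (al j * x j) - (- (s / 2) * x j ^+ 2 - 2 / s * al j ^+ 2)
          = s / 2 * (x j + 2 * al j / s) ^+ 2.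
    by field; rewrite gt_eqF.
  by apply: mulr_ge0; [rewrite divr_ge0 // ltW | exact: sqr_ge0].
have H3 : - (s / 2) * \sum_j x j ^+ 2 - 2 / s * \sum_j al j ^+ 2 <= 2 * \sum_j al j * x j.
  rewrite mulr_sumr mulr_sumr mulr_sumr -sumrB; apply: ler_sum => j _; exact: H2.
have H4 : - (s / 2) * w <= - (s / 2) * \sum_j x j ^+ 2.
  by rewrite !mulNr lerN2; apply: ler_wpM2l => //; rewrite divr_ge0 // ltW.
rewrite E1 in H1.
have H5 : s / 2 * w <= be + 2 / s * \sum_j al j ^+ 2 by lra.
have -> : w = 2 / s * (s / 2 * w) by field; rewrite gt_eqF.
by apply: ler_wpM2l => //; rewrite divr_ge0 // ltW.
Qed.

Lemma xz_mkzE (R : realType) n x w : xz (@mkz R n x w) = x.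
Proof. by apply: funext => j; rewrite xz_mkz. Qed.
Lemma cont_sq (R : realType) k (f : 'rV[R]_k -> R) :
  continuous f -> continuous (fun z => f z ^+ 2).
Proof.
move=> cf; have -> : (fun z => f z ^+ 2) = (fun z => f z * f z).
  by apply: funext => z; rewrite expr2.
exact: cont_mul.
Qed.

Lemma exists_min (R : realType) n m (D c : 'I_n.+1 -> R) (a : 'I_m -> 'I_n.+1 -> R)
  (b xi : 'I_m -> R) :
  (exists x, feasP a b xi x) ->
  (exists y : 'I_m -> R, (forall i, 0 <= y i) /\ 0 < \sum_i y i * xi i) ->
  exists z : 'rV[R]_(n.+1 + 1), feasR1 a b xi (xz z) (wz z) /\
    forall z', feasR1 a b xi (xz z') (wz z') ->
      objR1 D c (xz z) (wz z) <= objR1 D c (xz z') (wz z').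
Proof.
move=> [x0 Hx0] [y [y0 sg]].
have [W HW] := @feas_bound R n m a b xi y y0 sg.
pose K := [set z : 'rV[R]_(n.+1 + 1) | feasR1 a b xi (xz z) (wz z)].
have K0 : K !=set0.
  exists (mkz x0 (\sum_j x0 j ^+ 2)); rewrite /K /= xz_mkzE wz_mkz; split=> //.
have Kcl : closed K.
  have -> : K = (\bigcap_(i in setT)
      [set z | xi i * wz z + 2 * \sum_j a i j * xz z j <= b i])
      `&` [set z | \sum_j xz z j ^+ 2 <= wz z].
    apply/seteqP; split => z /=.
      by move=> [Hc Hn]; split => // i _; apply: Hc.
    by move=> [Hc Hn]; split => // i; apply: Hc.
  apply: closedI.
    apply: closed_bigI => i _; apply: closed_lefun; last exact: cont_cst.
    apply: cont_add; first by apply: cont_mul; [exact: cont_cst|exact: cont_wz].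
    apply: cont_mul; first exact: cont_cst.
    by apply: cont_sum => j; apply: cont_mul; [exact: cont_cst|exact: cont_xz].
  apply: closed_lefun; last exact: cont_wz.
  by apply: cont_sum => j; apply: cont_sq; exact: cont_xz.
set B := 1 + W.
have Kbox : K `<=` [set v : 'rV[R]_(n.+1 + 1) | forall k,
     (fun=> `[- B, B]%classic) k (v ord0 k)].
  move=> z Kz k /=; rewrite in_itv /= -ler_norml.
  have [Hc Hn] := Kz; have HwW := HW _ _ Kz.
  have Hs0 : 0 <= \sum_j xz z j ^+ 2 by apply: sumr_ge0 => j _; exact: sqr_ge0.
  case: (splitP k) => [j Hj|j Hj].
    have -> : k = lshift 1 j by apply/val_inj.
    rewrite -/(xz z j).
    have Hxj : xz z j ^+ 2 <= \sum_j xz z j ^+ 2.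
      rewrite (bigD1 j) //= lerDl; apply: sumr_ge0 => i _; exact: sqr_ge0.
    have [Hle1|Hgt1] := leP `|xz z j| 1.
      rewrite /B; lra.
    have : `|xz z j| <= `|xz z j| ^+ 2.
      by rewrite expr2 ler_peMl // ltW.
    rewrite real_normK ?num_real //; rewrite /B; lra.
  have -> : k = rshift n.+1 ord0.
    by apply/val_inj; rewrite /= Hj; case: j {Hj} => [[|]].
  rewrite -/(wz z) ger0_norm /B; lra.
have Kc : compact K.
  apply: (subclosed_compact Kcl _ Kbox).
  exact: (@rV_compact _ _ (fun=> `[- B, B]%classic) (fun=> @segment_compact _ (- B) B)).
have fc : continuous (fun z : 'rV[R]_(n.+1 + 1) => objR1 D c (xz z) (wz z)).
  rewrite /objR1; apply: cont_add; last first.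
    apply: cont_mul; first exact: cont_cst.
    by apply: cont_sum => j; apply: cont_mul; [exact: cont_cst|exact: cont_xz].
  apply: cont_add; first by apply: cont_mul; [exact: cont_cst|exact: cont_wz].
  by apply: cont_sum => j; apply: cont_mul; [exact: cont_cst|apply: cont_sq; exact: cont_xz].
have [z zK Hz] := EVT_min_rV K0 Kc (continuous_subspaceT fc).
exists z; split; first by rewrite inE in zK.
by move=> z' Kz'; apply: Hz; rewrite inE.
Qed.

Lemma tp (R : realType) n (u v : ('rV[R]_(n.+1 + 1) * R)%type) (t : R) :
  (u - t *: v).1 = u.1 - t *: v.1 /\ (u - t *: v).2 = u.2 - t * v.2.
Proof. split; reflexivity. Qed.
Lemma xzB (R : realType) n (u v : 'rV[R]_(n.+1 + 1)) t j :
  xz (u - t *: v) j = xz u j - t * xz v j.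
Proof. by rewrite /xz !mxE. Qed.
Lemma wzB (R : realType) n (u v : 'rV[R]_(n.+1 + 1)) t :
  wz (u - t *: v) = wz u - t * wz v.
Proof. by rewrite /wz !mxE. Qed.
Lemma sumxzB (R : realType) n (p : 'I_n.+1 -> R) (u v : 'rV[R]_(n.+1 + 1)) t :
  \sum_j p j * xz (u - t *: v) j = \sum_j p j * xz u j - t * \sum_j p j * xz v j.
Proof. rewrite mulr_sumr -sumrB; apply: eq_bigr => j _; rewrite xzB; ring. Qed.
Lemma sumxz_delta (R : realType) n (p : 'I_n.+1 -> R) j :
  \sum_k p k * xz (mkz (fun k => (k == j)%:R) 0) k = p j.
Proof.
rewrite (bigD1 j) //= xz_mkz eqxx mulr1 big1 ?addr0 // => k /negbTE kj.
by rewrite xz_mkz kj mulr0.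
Qed.
Lemma sumxz_0 (R : realType) n (p : 'I_n.+1 -> R) w :
  \sum_k p k * xz (mkz (fun k => 0) w) k = 0.
Proof. by rewrite big1 // => k _; rewrite xz_mkz mulr0. Qed.

Lemma pr1B (R : realType) n (u v : ('rV[R]_(n.+1 + 1) * R)%type) (t : R) :
  (u - t *: v).1 = u.1 - t *: v.1.
Proof. reflexivity. Qed.
Lemma pr2B (R : realType) n (u v : ('rV[R]_(n.+1 + 1) * R)%type) (t : R) :
  (u - t *: v).2 = u.2 - t * v.2.
Proof. reflexivity. Qed.

Lemma sum_lin (R : realType) n (p x y : 'I_n.+1 -> R) t :
  \sum_j p j * (x j + t * y j) = \sum_j p j * x j + t * \sum_j p j * y j.
Proof. rewrite mulr_sumr -big_split; apply: eq_bigr => j _ /=; ring. Qed.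
Lemma sum_sqlin (R : realType) n (p x y : 'I_n.+1 -> R) t :
  \sum_j p j * (x j + t * y j) ^+ 2 = \sum_j p j * x j ^+ 2
    + t * (2 * \sum_j (p j * x j) * y j) + t * (t * \sum_j p j * y j ^+ 2).
Proof.
rewrite !mulr_sumr -!big_split; apply: eq_bigr => j _ /=; ring.
Qed.
Lemma sum_sqlin1 (R : realType) n (x y : 'I_n.+1 -> R) t :
  \sum_j (x j + t * y j) ^+ 2 = \sum_j x j ^+ 2
    + t * (2 * \sum_j x j * y j) + t * (t * \sum_j y j ^+ 2).
Proof.
rewrite !mulr_sumr -!big_split; apply: eq_bigr => j _ /=; ring.
Qed.
Lemma xz_linE (R : realType) n (u v : 'rV[R]_(n.+1 + 1)) t :
  xz (u + t *: v) = fun j => xz u j + t * xz v j.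
Proof. by apply: funext => j; rewrite xz_lin. Qed.

Lemma kkt (R : realType) n m (D c : 'I_n.+1 -> R) (a : 'I_m -> 'I_n.+1 -> R)
  (b xi : 'I_m -> R) (z : 'rV[R]_(n.+1 + 1)) :
  (forall j : 'I_n.+1, j != ord0 -> D ord0 < D j) ->
  feasR1 a b xi (xz z) (wz z) ->
  (forall z', feasR1 a b xi (xz z') (wz z') ->
      objR1 D c (xz z) (wz z) <= objR1 D c (xz z') (wz z')) ->
  \sum_j xz z j ^+ 2 < wz z ->
  exists mu, feasAux D c a b xi mu (xz z) (wz z).
Proof.
move=> HD Kz Hmin Hlt.
have HD0 j : 0 <= D j - D ord0.
  have [->|jn] := eqVneq j ord0; first by rewrite subrr.
  by rewrite subr_ge0 ltW // HD.
pose s i := b i - (xi i * wz z + 2 * \sum_j a i j * xz z j).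
have s0 i : 0 <= s i by rewrite subr_ge0; case: Kz => Hc _; exact: Hc.
pose V := ('rV[R]_(n.+1 + 1) * R)%type.
pose G i (p : V) := xi i * wz p.1 + 2 * \sum_j a i j * xz p.1 j - s i * p.2.
pose A (k : nat) (p : V) :=
  match (insub k : option 'I_m) with Some i => G i p | None => - p.2 end.
pose Df y := D ord0 * wz y + 2 * \sum_j ((D j - D ord0) * xz z j) * xz y j
   + 2 * \sum_j c j * xz y j.
pose C (p : V) := - Df p.1.
have lA k : linF (A k).
  move=> u v t; rewrite /A; case: insub => [i|]; last by rewrite pr2B; ring.
  by rewrite /G pr1B pr2B wzB sumxzB; ring.
have lC : linF C.
  by move=> u v t; rewrite /C /Df pr1B wzB !sumxzB; ring.
have HF : forall p, (forall k, (k < m.+1)%N -> A k p <= 0) -> C p <= 0.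
  move=> [y tau] Hp /=.
  have Htau : 0 <= tau.
    have := Hp m (ltnSn m); rewrite /A; case: insubP => [i Pm _|_] /=.
      by rewrite ltnn in Pm.
    by rewrite oppr_le0.
  have HG i : G i (y, tau) <= 0.
    by have := Hp i (ltnW (ltn_ord i)); rewrite /A valK.
  rewrite /C /= oppr_le0 leNgt; apply/negP => HDf.
  pose q0 := \sum_j xz z j ^+ 2 - wz z.
  have q0n : q0 < 0 by rewrite subr_lt0.
  pose L := 2 * \sum_j xz z j * xz y j - wz y.
  pose Q := \sum_j xz y j ^+ 2.
  pose Qf := \sum_j (D j - D ord0) * xz y j ^+ 2.
  have Q0 : 0 <= Q by apply: sumr_ge0 => j _; exact: sqr_ge0.
  have Qf0 : 0 <= Qf by apply: sumr_ge0 => j _; apply: mulr_ge0 => //; exact: sqr_ge0.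
  pose dl := Num.min 1 (Num.min (- q0) (- Df y)).
  have dl0 : 0 < dl by rewrite /dl !lt_min ltr01 !oppr_gt0 q0n HDf.
  have dl1 : dl <= 1 by rewrite /dl ge_min lexx.
  have dlq : dl <= - q0 by rewrite /dl !ge_min lexx !orbT.
  have dlD : dl <= - Df y by rewrite /dl !ge_min lexx !orbT.
  pose E := 2 * (1 + tau + `|L| + Q + Qf).
  have E0 : 0 < E by rewrite /E; apply: mulr_gt0 => //; rewrite -!addrA ltr_pwDl // !addr_ge0.
  pose t := dl / E.
  have t0 : 0 < t by rewrite divr_gt0.
  have tE0 : t * E = dl by rewrite /t divfK // gt_eqF.
  have tE : 2 * t + 2 * (t * tau) + 2 * (t * `|L|) + 2 * (t * Q) + 2 * (t * Qf) = dl.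
    by rewrite -tE0 /E; ring.
  have P1 : 0 <= t * tau by rewrite mulr_ge0 // ltW.
  have P2 : 0 <= t * `|L| by rewrite mulr_ge0 // ltW.
  have P3 : 0 <= t * Q by rewrite mulr_ge0 // ltW.
  have P4 : 0 <= t * Qf by rewrite mulr_ge0 // ltW.
  have t1 : t <= 1 by lra.
  have tL : t * L <= t * `|L| by apply: ler_wpM2l; [exact: ltW | exact: ler_norm].
  have tQ : t * (t * Q) <= t * Q by exact: ler_piMl.
  have tQf : t * Qf <= - Df y / 2 by lra.
  have tQf2 : t * (t * Qf) <= t * (- Df y / 2) by apply: ler_wpM2l => //; exact: ltW.
  have tD : t * Df y < 0 by rewrite pmulr_rlt0.
  pose z' := z + t *: y.
  have Kz' : feasR1 a b xi (xz z') (wz z').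
    rewrite /z' xz_linE wz_lin /=; split.
      move=> i; rewrite sum_lin.
      have := HG i; rewrite /G /= => HGi.
      have h1 : t * (xi i * wz y + 2 * \sum_j a i j * xz y j) <= t * (s i * tau).
        by apply: ler_wpM2l; [exact: ltW | rewrite -subr_le0].
      have h2 : s i * (t * tau) <= s i * 1 by apply: ler_wpM2l => //; lra.
      have : s i = b i - (xi i * wz z + 2 * \sum_j a i j * xz z j) by [].
      nra.
    rewrite sum_sqlin1.
    have e1 : t * L = t * (2 * \sum_j xz z j * xz y j) - t * wz y by rewrite /L; ring.
    have e2 : q0 = \sum_j xz z j ^+ 2 - wz z by [].
    rewrite -/Q; lra.
  have fz' : objR1 D c (xz z') (wz z') =
      objR1 D c (xz z) (wz z) + t * Df y + t * (t * Qf).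
    rewrite /objR1 /z' xz_linE wz_lin /= sum_sqlin sum_lin /Df /Qf /d1star; ring.
  have := Hmin z' Kz'; rewrite fz'; lra.
have [mu [mu0 Hmu]] := @farkas R _ m.+1 A C lA lC HF.
have HmuG : forall p : V, p.2 = 0 -> C p = \sum_(i < m) mu i * G i p.
  move=> p p2; rewrite Hmu big_ord_recr /=.
  have -> : A m p = 0.
    rewrite /A; case: insubP => [i Pm _|_] /=; first by rewrite ltnn in Pm.
    by rewrite p2 oppr0.
  by rewrite mulr0 addr0; apply: eq_bigr => i _; rewrite /A valK.
have Hj : forall j, (D j - D ord0) * xz z j + c j + \sum_i a i j * mu i = 0.
  move=> j; have := HmuG (mkz (fun k => (k == j)%:R) 0, 0) erefl.
  rewrite /C /G /Df /= wz_mkz !sumxz_delta.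
  under eq_bigr do rewrite sumxz_delta.
  have -> : \sum_(i < m) mu i * (xi i * 0 + 2 * a i j - s i * 0)
     = 2 * \sum_i a i j * mu i.
    by rewrite mulr_sumr; apply: eq_bigr => i _; ring.
  move=> h; lra.
exists (fun i : 'I_m => mu i); split; [|split; [|split; [|split]]].
- have := HmuG (mkz (fun _ => 0) 1, 0) erefl.
  rewrite /C /G /Df /= wz_mkz !sumxz_0.
  under eq_bigr do rewrite sumxz_0.
  have -> : \sum_(i < m) mu i * (xi i * 1 + 2 * 0 - s i * 0) = \sum_i xi i * mu i.
    by apply: eq_bigr => i _; ring.
  rewrite /d1star => h; lra.
- by have := Hj ord0; rewrite subrr mul0r add0r.
- move=> j _; rewrite /d1star; exact: Hj.
- by case: Kz.
- by move=> i.
Qed.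

Lemma objR1_P (R : realType) n (D c : 'I_n.+1 -> R) (x : 'I_n.+1 -> R) :
  objR1 D c x (\sum_j x j ^+ 2) = objP D c x.
Proof.
rewrite /objR1 /objP; congr (_ + _); rewrite mulr_sumr -big_split.
by apply: eq_bigr => j _ /=; ring.
Qed.

Unset Implicit Arguments.
Local Close Scope classical_set_scope.

Theorem proposition4 (R : realType) (n m : nat)
  (D c : 'I_n.+1 -> R) (a : 'I_m -> 'I_n.+1 -> R) (b xi : 'I_m -> R) :
  assumption1 a b xi ->
  (forall j : 'I_n.+1, j != ord0 -> D ord0 < D j) ->
  (0 <= valAux D c a b xi)%E ->
  valR1 D c a b xi = cstar D c a b xi.
Proof.
move=> [Hfeas [Hy _]] HD Haux.
have [z [Kz Hz]] := @exists_min R n m D c a b xi Hfeas Hy.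
have [x Hx Hxmin] : exists2 x, feasP a b xi x &
    forall x' w', feasR1 a b xi x' w' -> objP D c x <= objR1 D c x' w'.
  have [Hlt|Hge] := ltP (\sum_j xz z j ^+ 2) (wz z).
    have [mu Hmu] := kkt HD Kz Hz Hlt.
    have : (valAux D c a b xi <= (\sum_j xz z j ^+ 2 - wz z)%:E)%E.
      rewrite /valAux; apply: ge_ereal_inf; exists ((\sum_j xz z j ^+ 2 - wz z)%:E) => //.
      by exists ((mu, xz z), wz z).
    move/(le_trans Haux); rewrite lee_fin subr_ge0 leNgt Hlt //.
  have Heq : wz z = \sum_j xz z j ^+ 2.
    by apply/eqP; rewrite eq_le Hge /=; case: Kz.
  exists (xz z).
    by move=> i; case: Kz => Hc _; rewrite -Heq; exact: Hc.
  move=> x' w' H'.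
  rewrite -objR1_P -Heq.
  have := Hz (mkz x' w'); rewrite xz_mkzE wz_mkz; apply; exact: H'.
rewrite /valR1 /cstar; apply/le_anti/andP; split.
  apply: le_ereal_inf_tmp => _ [x0 Hx0 <-].
  apply: ge_ereal_inf; exists (objP D c x0)%:E => //.
  exists (x0, \sum_j x0 j ^+ 2) => /=; last by rewrite objR1_P.
  by split.
apply: (@le_trans _ _ (objP D c x)%:E).
  by apply: ge_ereal_inf; exists (objP D c x)%:E => //; exists x.
apply: le_ereal_inf_tmp => _ [p Hp <-].
by rewrite lee_fin; apply: Hxmin.
Qed.
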